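(* Let $N\ge2$, $a\ge0$, and let $(X_t)_{t\ge0}$ be the continuous-time Markov chain on $\{0,1,\dots,N\}$ with transitions $j\to j-1$ at rate $j$ and $j\to j+1$ at rate $a\,\frac{j(j-1)(N-j)}{N(N-1)}$, started from $X_0=N$. For $j=1,\dots,N$ let $\tau_j=\int_0^\infty P(X_t=j\mid X_0=N)\,dt$. Then $$\sum_{j=1}^N j\,\tau_j \le \sum_{j=1}^N\sum_{i=0}^j (a/4)^i.$$
   Context: The chain $X_t$ is the number of individuals in a single patch of the contact process with sexual reproduction in the absence of migrations (outer birth parameter $b=0$); $\tau_j$ is the expected total time spent in state $j$. *)

(* Defs.v *)
From HB Require Import structures.
From mathcomp Require Import all_boot all_order all_algebra.
From mathcomp Require Import all_classical all_reals all_analysis.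
Set Implicit Arguments. Unset Strict Implicit. Unset Printing Implicit Defensive.
Import Order.TTheory GRing.Theory Num.Theory.
Local Open Scope ring_scope.

Definition birth_rate (R : realType) (N : nat) (a : R) (j : nat) : R :=
  a * (j * j.-1 * (N - j))%:R / (N * N.-1)%:R.

Definition generator (R : realType) (N : nat) (a : R) : 'M[R]_N.+1 :=
  \matrix_(i < N.+1, j < N.+1)
    if (j : nat).+1 == i then (i : nat)%:R
    else if (j : nat) == (i : nat).+1 then birth_rate N a i
    else if i == j then - ((i : nat)%:R + birth_rate N a i)
    else 0.

(* Transition function of the finite-state CTMC: P(t) = exp(t Q),
   defined entrywise by the exponential series sum_k t^k/k! (Q^k)_{ij}. *)
Definition trans_prob (R : realType) (N : nat) (a : R) (t : R) (i j : 'I_N.+1) : R :=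
  limn (fun n : nat => \sum_(k < n) (t ^+ k / (k`!)%:R) * ((generator N a) ^+ k) i j).

Definition occupation_time (R : realType) (N : nat) (a : R) (j : nat) : \bar R :=
  (\int[lebesgue_measure]_(t in `[0%R, +oo[%classic)
      (@trans_prob R N a t ord_max (inord j))%:E)%E.

(* Main.v *)
Require Import Defs.
From HB Require Import structures.
From mathcomp Require Import all_boot all_order all_algebra.
From mathcomp Require Import all_classical all_reals all_analysis.
From mathcomp Require Import ring lra zify.
From mathcomp Require Import measurable_realfun.
Set Implicit Arguments. Unset Strict Implicit. Unset Printing Implicit Defensive.
Import Order.TTheory GRing.Theory Num.Theory.
Import numFieldNormedType.Exports.
Local Open Scope classical_set_scope.
Local Open Scope ring_scope.

Section MExp.
Variable R : realType.
Variable n : nat.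
Implicit Type A : 'M[R]_n.+1.

Definition coefs A (i j : 'I_n.+1) (p : nat) (k : nat) : R :=
  (A ^+ (k + p)) i j / (k`!)%:R.

Definition mexp A (t : R) i j := limn (pseries (coefs A i j 0) t).

Definition mnorm A := \sum_i \sum_j `|A i j|.

Lemma mnorm_ge0 A : 0 <= mnorm A.
Proof. by apply: sumr_ge0 => i _; apply: sumr_ge0. Qed.

Lemma col_le_mnorm A j : \sum_l `|A l j| <= mnorm A.
Proof.
apply: ler_sum => l _.
by rewrite (bigD1 j) //= lerDl sumr_ge0.
Qed.

Lemma mpow_bound A k i j : `|(A ^+ k) i j| <= mnorm A ^+ k.
Proof.
elim: k i j => [|k IH] i j.
  by rewrite expr0 mxE; case: (i == j); rewrite /= ?normr1 ?normr0.
rewrite exprSr mxE.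
apply: (le_trans (ler_norm_sum _ _ _)).
apply: (@le_trans _ _ (\sum_l mnorm A ^+ k * `|A l j|)).
  by apply: ler_sum => l _; rewrite normrM ler_wpM2r.
rewrite -mulr_sumr exprSr ler_wpM2l ?exprn_ge0 ?mnorm_ge0 //.
exact: col_le_mnorm.
Qed.

Lemma cvg_pseries_bound (c : nat -> R) (C M x : R) :
  0 <= M -> (forall k, `|c k| <= C * (M ^+ k / k`!%:R)) -> cvgn (pseries c x).
Proof.
move=> M0 hc.
have C0 : 0 <= C.
  by have := hc 0%N; rewrite expr0 fact0 divr1 mulr1; apply: le_trans.
apply: normed_cvg.
apply: (@series_le_cvg _ _ (C *: exp_coeff (M * `|x|))).
- by move=> k /=.
- by move=> k /=; apply: mulr_ge0 => //; apply: divr_ge0; rewrite ?exprn_ge0 ?mulr_ge0.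
- move=> k /=; rewrite normrM normrX. rewrite !fctE /exp_coeff /= exprMn.
  rewrite (_ : C *: _ = C * (M ^+ k / k`!%:R) * `|x| ^+ k); last by rewrite /GRing.scale/=; ring.
  by rewrite ler_wpM2r ?exprn_ge0 // hc.
- exact: is_cvg_seriesZ (is_cvg_series_exp_coeff _).
Qed.

Lemma diffs_coefs A i j p : pseries_diffs (coefs A i j p) = coefs A i j p.+1.
Proof.
apply/funext => k; rewrite /pseries_diffs /coefs addSnnS factS natrM.
field.
by rewrite addrC natr1 !pnatr_eq0 -lt0n fact_gt0.
Qed.

Lemma coefs_bound A i j p k :
  `|coefs A i j p k| <= mnorm A ^+ p * (mnorm A ^+ k / k`!%:R).
Proof.
rewrite /coefs normrM normfV normr_nat mulrA (mulrC (mnorm A ^+ p)) -exprD.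
by rewrite ler_wpM2r ?invr_ge0 // mpow_bound.
Qed.

Lemma cvg_coefs A i j p t : cvgn (pseries (coefs A i j p) t).
Proof. by apply: (cvg_pseries_bound (mnorm_ge0 A)) => k; apply: coefs_bound. Qed.

Lemma mexp_derive_raw A i j (t : R) :
  is_derive t (1:R) (fun t => mexp A t i j) (limn (pseries (coefs A i j 1) t)).
Proof.
rewrite /mexp -diffs_coefs.
apply: (@pseries_snd_diffs _ _ (`|t| + 1)).
- exact: cvg_coefs.
- rewrite diffs_coefs; exact: cvg_coefs.
- rewrite !diffs_coefs; exact: cvg_coefs.
- by rewrite [ltRHS]ger0_norm ?addr_ge0 // ltrDl.
Qed.

Lemma cvg_sum_seq (I : Type) (s : seq I) (f : I -> nat -> R) (l : I -> R) :
  (forall i, f i @ \oo --> l i) ->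
  (fun m => \sum_(i <- s) f i m) @ \oo --> \sum_(i <- s) l i.
Proof.
move=> H; elim: s => [|a s IH].
  rewrite big_nil; under eq_fun do rewrite big_nil; exact: cvg_cst.
rewrite big_cons; under eq_fun do rewrite big_cons; exact: cvgD.
Qed.

Lemma mexp_derive A i j (t : R) :
  is_derive t (1:R) (fun t => mexp A t i j) (\sum_l mexp A t i l * A l j).
Proof.
suff -> : \sum_l mexp A t i l * A l j = limn (pseries (coefs A i j 1) t).
  exact: mexp_derive_raw.
apply/esym/cvg_lim => //.
have -> : pseries (coefs A i j 1) t =
    (fun m => \sum_l (pseries (coefs A i l 0) t m * A l j)).
  apply/funext => m; rewrite /pseries /series /=.
  under [RHS]eq_bigr do rewrite mulr_suml.
  rewrite exchange_big /=; apply: eq_bigr => k _.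
  rewrite /coefs addn1 addn0 exprSr mxE !mulr_suml; apply: eq_bigr => l _.
  ring.
apply: cvg_sum_seq => l; apply: cvgMl.
exact: cvg_coefs.
Qed.

Lemma mexp0 A i j : mexp A 0 i j = (i == j)%:R.
Proof.
rewrite /mexp; suff H : pseries (coefs A i j 0) 0 @ \oo --> ((i == j)%:R : R) by apply: cvg_lim H.
apply: cvg_near_cst; exists 1%N => // m /= hm.
rewrite /pseries /series /= (big_ltn hm) big_add1 big1 ?addr0.
  by rewrite /coefs expr0 mulr1 fact0 divr1 expr0 mxE.
by move=> k _; rewrite expr0n mulr0.
Qed.

Lemma mexp_ge0 A i j t : (forall i j, 0 <= A i j) -> 0 <= t -> 0 <= mexp A t i j.
Proof.
move=> A0 t0.
have Ak : forall k i j, 0 <= (A ^+ k) i j.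
  elim=> [|k IH] i' j'; first by rewrite expr0 mxE; case: (_ == _).
  by rewrite exprSr mxE; apply: sumr_ge0 => l _; apply: mulr_ge0.
apply: limr_ge; first exact: cvg_coefs.
apply: nearW => m; rewrite /pseries /series /=; apply: sumr_ge0 => k _.
by rewrite /coefs; apply: mulr_ge0; [apply: divr_ge0|apply: exprn_ge0].
Qed.

End MExp.

Section Chain.
Variable R : realType.

Lemma is_derive_lin (k x : R) : is_derive x (1:R) (fun t : R => k * t) k.
Proof.
have := is_deriveZ k (is_derive_id x (1:R)).
by rewrite /GRing.scale /= mulr1.
Qed.

Lemma is_derive_expRk (k x : R) :
  is_derive x (1:R) (fun t => expR (k * t)) (k * expR (k * x)).
Proof.
have d1 := is_derive_lin k x.
have d : derivable (fun t => expR (k * t)) x 1.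
  apply/derivable1_diffP.
  apply: (@differentiable_comp _ _ _ _ (fun t : R => k * t) expR).
    by apply/derivable1_diffP; case: d1.
  by apply/derivable1_diffP; apply: derivable_expR.
apply: DeriveDef => //.
rewrite -derive1E (@derive1_comp _ (fun t : R => k * t) expR).
- by rewrite derive1E derive_val derive1E derive_val mulrC.
- by case: d1.
- exact: derivable_expR.
Qed.

End Chain.

Section DHelp.
Variable R : realType.

Lemma is_derive_mulf (f g : R -> R) (df dg t : R) :
  is_derive t (1:R) f df -> is_derive t (1:R) g dg ->
  is_derive t (1:R) (fun s => f s * g s) (f t * dg + g t * df).
Proof. by move=> hf hg; exact: (is_deriveM hf hg). Qed.

Lemma is_derive_sqf (f : R -> R) (df t : R) :
  is_derive t (1:R) f df ->
  is_derive t (1:R) (fun s => f s ^+ 2) (2 * f t * df).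
Proof.
move=> hf; have := is_deriveX 2 hf.
by rewrite expr1 /GRing.scale /=.
Qed.

Lemma is_derive_sumf m (f : 'I_m -> R -> R) (df : 'I_m -> R) (t : R) :
  (forall j, is_derive t (1:R) (f j) (df j)) ->
  is_derive t (1:R) (fun s => \sum_j f j s) (\sum_j df j).
Proof.
move=> hf; have := @is_derive_sum _ _ _ m f t 1 df hf.
by rewrite fct_sumE.
Qed.

End DHelp.

Section Quad.
Variable R : realType.
Variable n : nat.

Lemma sum_delta (f : 'I_n.+1 -> R) j : \sum_l f l * (l == j)%:R = f j.
Proof.
rewrite (bigD1 j) //= eqxx mulr1 big1 ?addr0 // => l /negbTE ->.
by rewrite mulr0.
Qed.

Lemma quad_bound (B : 'M[R]_n.+1) (d : 'I_n.+1 -> R) :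
  (forall l j, 0 <= B l j) ->
  \sum_j d j * (\sum_l d l * B l j) <= (\sum_l \sum_j B l j) * \sum_j d j ^+ 2.
Proof.
move=> B0; set S := \sum_j d j ^+ 2.
have dS j : d j ^+ 2 <= S.
  by rewrite /S (bigD1 j) //= lerDl sumr_ge0 // => l _; rewrite sqr_ge0.
rewrite mulr_suml; under [leRHS]eq_bigr do rewrite mulr_suml.
rewrite [leRHS]exchange_big /=; apply: ler_sum => j _.
rewrite mulr_sumr; apply: ler_sum => l _.
have h1 := dS j; have h2 := dS l.
have h3 : d j * d l <= S by nra.
by rewrite mulrA [leRHS]mulrC ler_wpM2r.
Qed.

End Quad.

Section Pos.
Variable R : realType.
Variable n : nat.
Variable Q : 'M[R]_n.+1.
Variable c : R.
Variable i : 'I_n.+1.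
Hypothesis hB : forall l j, 0 <= Q l j + c * (l == j)%:R.

Local Definition Bm : 'M[R]_n.+1 := \matrix_(l, j) (Q l j + c * (l == j)%:R).

Local Definition F j t := expR (c * t) * mexp Q t i j.
Local Definition H j t := mexp Bm t i j.
Local Definition D j t := F j t - H j t.

Lemma dF j t : is_derive t (1:R) (F j) (\sum_l F l t * Bm l j).
Proof.
apply: is_derive_eq.
  exact: (is_derive_mulf (is_derive_expRk c t) (mexp_derive Q i j t)).
rewrite /F /Bm.
under [RHS]eq_bigr do rewrite mxE mulrDr.
rewrite big_split /=.
under [X in _ = _ + X]eq_bigr do rewrite mulrA.
rewrite (sum_delta (fun l => expR (c * t) * mexp Q t i l * c)).
rewrite mulr_sumr; congr (_ + _); last by ring.
by apply: eq_bigr => l _; rewrite mulrA.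
Qed.

Lemma dH j t : is_derive t (1:R) (H j) (\sum_l H l t * Bm l j).
Proof. exact: mexp_derive. Qed.

Lemma dD j t : is_derive t (1:R) (D j) (\sum_l D l t * Bm l j).
Proof.
apply: is_derive_eq.
  exact: (is_deriveB (dF j t) (dH j t)).
by rewrite /D -sumrB; apply: eq_bigr => l _; rewrite mulrBl.
Qed.

Lemma D0 j : D j 0 = 0.
Proof. by rewrite /D /F /H !mexp0 mulr0 expR0 mul1r subrr. Qed.

Local Definition L := \sum_l \sum_j Bm l j.
Local Definition u t := expR ((- (2 * L)) * t) * \sum_j D j t ^+ 2.

Lemma Bm_ge0 l j : 0 <= Bm l j.
Proof. by rewrite mxE. Qed.

Lemma du t : is_derive t (1:R) u
  (expR ((- (2 * L)) * t) * (\sum_j 2 * D j t * (\sum_l D l t * Bm l j))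
   + (\sum_j D j t ^+ 2) * ((- (2 * L)) * expR ((- (2 * L)) * t))).
Proof.
apply: is_derive_mulf; first exact: is_derive_expRk.
apply: is_derive_sumf => j.
exact: is_derive_sqf (dD j t).
Qed.

Lemma du_le0 (t : R) : (u^`())%classic t <= 0.
Proof.
rewrite derive1E; have dut := du t; rewrite derive_val.
set E := expR _; set S := \sum_j D j t ^+ 2.
have E0 : 0 < E by apply: expR_gt0.
have q := quad_bound (fun j => D j t) Bm_ge0.
rewrite -/L -/S /= in q.
have -> : \sum_j 2 * D j t * (\sum_l D l t * Bm l j) =
          2 * \sum_j D j t * (\sum_l D l t * Bm l j).
  by rewrite mulr_sumr; apply: eq_bigr => j _; rewrite mulrA.
nra.
Qed.

Lemma D_eq0 j t : 0 <= t -> D j t = 0.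
Proof.
move=> t0.
have dU x : derivable u x 1 by case: (du x).
have ut : u t <= u 0.
  apply: (@ler0_derive1_nincry _ u 0) => //.
  - by move=> x _; apply: du_le0.
  - by apply: derivable_within_continuous => x _.
have u0 : u 0 = 0.
  by rewrite /u big1 ?mulr0 // => j' _; rewrite D0 expr0n.
have S0 : 0 <= \sum_j D j t ^+ 2 by apply: sumr_ge0 => j' _; apply: sqr_ge0.
have : \sum_j D j t ^+ 2 = 0.
  apply/eqP; rewrite eq_le S0 andbT.
  have E0 := expR_gt0 ((- (2 * L)) * t).
  rewrite u0 /u in ut.
  by rewrite -(pmulr_rle0 _ E0).
move/(psumr_eq0P (fun j' _ => sqr_ge0 (D j' t))) => /(_ j isT).
by move/eqP; rewrite sqrf_eq0 => /eqP.
Qed.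

Lemma mexp_gen_ge0 j t : 0 <= t -> 0 <= mexp Q t i j.
Proof.
move=> t0; have := D_eq0 j t0; rewrite /D /F => /eqP; rewrite subr_eq0 => /eqP h.
have H0 : 0 <= H j t by apply: mexp_ge0 => // l j'; apply: Bm_ge0.
by rewrite -(pmulr_rge0 _ (expR_gt0 (c * t))) h.
Qed.

End Pos.

Section Gen.
Variable R : realType.
Variable N : nat.
Variable a : R.
Hypothesis hN : (2 <= N)%N.
Hypothesis ha : 0 <= a.

Local Notation Q := (generator N a).
Local Notation lam := (birth_rate N a).

Lemma lam_ge0 k : 0 <= lam k.
Proof. by rewrite /birth_rate; apply: divr_ge0 => //; apply: mulr_ge0. Qed.

Lemma gen_entry (l j : 'I_N.+1) :
  Q l j = ((j:nat).+1 == l)%:R * (l:nat)%:R + ((j:nat) == (l:nat).+1)%:R * lam l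
          - (l == j)%:R * ((l:nat)%:R + lam l).
Proof.
rewrite mxE.
case: eqP => e1; case: eqP => e2; case: eqP => e3; (try subst);
  (try (exfalso; lia)); by rewrite /= ?mul1r ?mul0r ?subr0 ?addr0 ?add0r ?sub0r.
Qed.

Lemma gen_offdiag (l j : 'I_N.+1) : l != j -> 0 <= Q l j.
Proof.
move=> /negbTE lj; rewrite gen_entry lj mul0r subr0.
by apply: addr_ge0; apply: mulr_ge0 => //; apply: lam_ge0.
Qed.

Lemma gen_hB (l j : 'I_N.+1) : 0 <= Q l j + mnorm Q * (l == j)%:R.
Proof.
case: (eqVneq l j) => [<-|lj]; last by rewrite mulr0 addr0 gen_offdiag.
rewrite mulr1.
have : `|Q l l| <= mnorm Q.
  rewrite /mnorm (bigD1 l) //= (bigD1 l) //= -addrA lerDl.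
  by apply: addr_ge0; apply: sumr_ge0 => *; [|apply: sumr_ge0 => *].
rewrite -subr_ge0 => h; apply: le_trans h _.
have := ler_norm (- Q l l); rewrite normrN; lra.
Qed.

End Gen.

Section Lyap.
Variable R : realType.
Variable N : nat.
Variable a : R.
Hypothesis hN : (2 <= N)%N.
Hypothesis ha : 0 <= a.

Local Notation Q := (generator N a).
Local Notation lam := (birth_rate N a).

Definition rr : R := a / 4.
Definition SS (m : nat) : R := \sum_(0 <= i < m.+1) rr ^+ i.
Definition dd (k : nat) : R := SS (N.+1 - k).
Definition hh (j : nat) : R := \sum_(1 <= k < j.+1) dd k.

Lemma rr_ge0 : 0 <= rr.
Proof. by rewrite /rr divr_ge0. Qed.

Lemma SS_ge1 m : 1 <= SS m.
Proof.
rewrite /SS big_nat_recl //= expr0 lerDl.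
by apply: sumr_ge0 => i _; apply: exprn_ge0; apply: rr_ge0.
Qed.

Lemma SS_rec m : SS m.+1 = 1 + rr * SS m.
Proof.
rewrite /SS big_nat_recl //= expr0 mulr_sumr; congr (_ + _).
by apply: eq_bigr => i _; rewrite exprS.
Qed.

Lemma hh0 : hh 0 = 0.
Proof. by rewrite /hh big_geq. Qed.

Lemma hh_rec j : hh j.+1 = hh j + dd j.+1.
Proof. by rewrite /hh big_nat_recr. Qed.

Lemma hh_ge0 j : 0 <= hh j.
Proof.
rewrite /hh; apply: sumr_ge0 => k _; apply: le_trans (SS_ge1 _); exact: ler01.
Qed.

Lemma lam_bound (l : nat) : (l <= N)%N -> lam l <= rr * l%:R.
Proof.
move=> lN.
case: l lN => [|l] lN.
  by rewrite /birth_rate !mul0n mulr0 mul0r mulr0.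
have Y0 : 0 < (N * N.-1)%:R :> R by rewrite ltr0n muln_gt0; apply/andP; split; lia.
rewrite /birth_rate ler_pdivrMr //.
have exy : (l.+1.-1 + (N - l.+1) = N.-1)%N by lia.
have eN : (N = N.-1.+1)%N by lia.
set x : R := (l.+1.-1)%:R; set y : R := (N - l.+1)%:R.
have hM : x + y = (N.-1)%:R by rewrite /x /y -natrD exy.
have h1 : 4 * (x * y) <= (N * N.-1)%:R.
  have hN1 : (N%:R : R) = N.-1%:R + 1 by rewrite natr1 -eN.
  rewrite natrM hN1 -hM.
  have x0 : 0 <= x by rewrite /x ler0n.
  have y0 : 0 <= y by rewrite /y ler0n.
  have := sqr_ge0 (x - y); nra.
have aL : 0 <= a * (l.+1)%:R by rewrite mulr_ge0.
rewrite !natrM -/x -/y.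
rewrite (_ : a * ((l.+1)%:R * x * y) = (a * (l.+1)%:R) * (x * y)); last by ring.
rewrite (_ : rr * (l.+1)%:R * (N%:R * N.-1%:R) = (a * (l.+1)%:R) * ((N * N.-1)%:R / 4)); last first.
  by rewrite /rr natrM; field.
rewrite ler_wpM2l // ler_pdivlMr //; lra.
Qed.

Lemma sum_ord_eq (k : nat) (f : nat -> R) :
  \sum_(j < N.+1) ((j:nat) == k)%:R * f j = if (k < N.+1)%N then f k else 0.
Proof.
case: ifP => hk.
  rewrite (bigD1 (Ordinal hk)) //= eqxx mul1r big1 ?addr0 // => j hj.
  rewrite (_ : ((j:nat) == k) = false) ?mul0r //.
  apply/negbTE; move: hj; apply: contra => /eqP e; apply/eqP/val_inj => /=.
  exact: e.
apply: big1 => j _; rewrite (_ : ((j:nat) == k) = false) ?mul0r //.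
by apply/eqP => e; move: (ltn_ord j); rewrite e hk.
Qed.

Lemma sum_ord_eq2 (l : 'I_N.+1) (f : nat -> R) :
  \sum_(j < N.+1) (l == j)%:R * f j = f l.
Proof.
rewrite (bigD1 l) //= eqxx mul1r big1 ?addr0 // => j hj.
by rewrite eq_sym (negbTE hj) mul0r.
Qed.

Lemma gen_h (l : 'I_N.+1) : \sum_j Q l j * hh j <= - (l:nat)%:R.
Proof.
under eq_bigr do rewrite gen_entry // mulrBl mulrDl.
rewrite sumrB big_split /=.
under eq_bigr do rewrite mulrAC.
under [X in _ + X - _]eq_bigr do rewrite mulrAC.
under [X in _ - X]eq_bigr do rewrite mulrAC.
rewrite -!mulr_suml sum_ord_eq sum_ord_eq2.
case: l => [[|l'] hl] /=.
  have -> : lam 0 = 0 by rewrite /birth_rate !mul0n mulr0 mul0r.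
  by rewrite !mulr0 hh0 mul0r subr0 add0r oppr0.
under eq_bigr do rewrite eqSS.
rewrite sum_ord_eq (ltnW hl) hh_rec.
have d1 : 1 <= dd l'.+1 by apply: SS_ge1.
have lb := @lam_bound l'.+1 hl.
have lam0 := lam_ge0 N ha l'.+1.
case: ifP => hl2.
  rewrite hh_rec.
  have -> : dd l'.+1 = 1 + rr * dd l'.+2.
    rewrite /dd -SS_rec; congr SS; lia.
  have d2 : 1 <= dd l'.+2 by apply: SS_ge1.
  have r0 := rr_ge0.
  have p : dd l'.+2 * lam l'.+1 <= dd l'.+2 * (rr * l'.+1%:R).
    by rewrite ler_wpM2l //; lra.
  lra.
have -> : lam l'.+1 = 0.
  have -> : l'.+1 = N by lia.
  by rewrite /birth_rate subnn !muln0 mulr0 mul0r.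
have l0 : 0 <= l'.+1%:R :> R by apply: ler0n.
rewrite hh_rec; nra.
Qed.

Lemma hhN : hh N = \sum_(1 <= j < N.+1) \sum_(0 <= i < j.+1) (a / 4) ^+ i.
Proof.
rewrite [RHS]big_nat_rev /hh /dd /SS /rr.
apply: eq_big_nat => k /andP[k1 kN].
by rewrite (_ : (1 + N.+1 - k.+1 = N.+1 - k)%N) //; lia.
Qed.

End Lyap.

Section Helpers.
Variable R : realType.

Lemma is_derive_mulk (f : R -> R) (k df t : R) :
  is_derive t (1:R) f df -> is_derive t (1:R) (fun s => f s * k) (df * k).
Proof.
move=> hf; have hc : is_derive t (1:R) (fun _ : R => k) 0.
  exact: is_derive_cst.
apply: is_derive_eq.
by rewrite /GRing.scale /= mulr0 add0r mulrC.
Qed.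

Lemma is_derive_opp (f : R -> R) (df t : R) :
  is_derive t (1:R) f df -> is_derive t (1:R) (fun s => - f s) (- df).
Proof. by move=> hf; exact: (is_deriveN hf). Qed.

Lemma cont_of_derive (f : R -> R) (x : R) : derivable f x 1 -> f @ x --> f x.
Proof. by move=> /derivable1_diffP/differentiable_continuous. Qed.

End Helpers.

Section Main.
Variable R : realType.
Variable N : nat.
Variable a : R.
Hypothesis hN : (2 <= N)%N.
Hypothesis ha : 0 <= a.
Local Notation Q := (generator N a).

Definition PP (j : 'I_N.+1) (t : R) := mexp Q t ord_max j.

Lemma trans_probE (t : R) j : @trans_prob R N a t ord_max j = PP j t.
Proof.
rewrite /trans_prob /PP /mexp; congr (lim (_ @ \oo)).
apply/funext => m; rewrite /pseries /series /=.
elim: m => [|m IH]; first by rewrite big_ord0 big_geq.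
rewrite big_ord_recr big_nat_recr //= IH /coefs addn0; congr (_ + _); ring.
Qed.

Lemma PP_ge0 j t : 0 <= t -> 0 <= PP j t.
Proof.
by apply: (@mexp_gen_ge0 _ _ Q (mnorm Q) ord_max) => l j'; apply: gen_hB.
Qed.

Lemma dPP j t : is_derive t (1:R) (PP j) (\sum_l PP l t * Q l j).
Proof. exact: mexp_derive. Qed.

Definition gg (l : 'I_N.+1) := \sum_j Q l j * hh N a j.
Definition VV t := \sum_j PP j t * hh N a j.
Definition psi t := \sum_l PP l t * (- gg l).
Definition FF t := - VV t.
Definition phi t := \sum_(1 <= j < N.+1) j%:R * PP (inord j) t.

Lemma dVV t : is_derive t (1:R) VV (\sum_l PP l t * gg l).
Proof.
apply: is_derive_eq.
  apply: is_derive_sumf => j; apply: is_derive_mulk; exact: dPP.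
rewrite /gg; under eq_bigr do rewrite mulr_suml.
rewrite exchange_big /=; apply: eq_bigr => l _.
by rewrite mulr_sumr; apply: eq_bigr => j _; rewrite mulrA.
Qed.

Lemma dFF t : is_derive t (1:R) FF (psi t).
Proof.
apply: is_derive_eq; first exact: is_derive_opp (dVV t).
by rewrite /psi -sumrN; apply: eq_bigr => l _; rewrite mulrN.
Qed.

Lemma dpsi t : derivable psi t 1.
Proof.
have : is_derive t (1:R) psi (\sum_l (\sum_j PP j t * Q j l) * (- gg l)).
  by apply: is_derive_sumf => l; apply: is_derive_mulk; exact: dPP.
by case.
Qed.

Lemma dphi t : derivable phi t 1.
Proof.
rewrite /phi.
have -> : (fun t => \sum_(1 <= j < N.+1) j%:R * PP (inord j) t) =
    (fun t => \sum_(j < N) (j.+1)%:R * PP (inord j.+1) t).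
  by apply/funext => s; rewrite big_add1 /= big_mkord.
have : is_derive t (1:R) (fun t => \sum_(j < N) (j.+1)%:R * PP (inord j.+1) t)
   (\sum_(j < N) (\sum_l PP l t * Q l (inord j.+1)) * (j.+1)%:R).
  apply: is_derive_sumf => j.
  under [X in is_derive _ _ X _]funext do rewrite mulrC.
  by apply: is_derive_mulk; exact: dPP.
by case.
Qed.

Lemma phi_le_psi t : 0 <= t -> phi t <= psi t.
Proof.
move=> t0.
have e1 : \sum_(l < N.+1) PP l t * (l:nat)%:R = phi t.
  have e0 : \sum_(0 <= j < N.+1) j%:R * PP (inord j) t = phi t.
    by rewrite big_ltn // mul0r add0r.
  rewrite -e0 big_mkord; apply: eq_bigr => l _; by rewrite inord_val mulrC.
rewrite -e1 /psi; apply: ler_sum => l _.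
rewrite ler_wpM2l ?PP_ge0 //.
by rewrite lerNr; apply: gen_h.
Qed.

Lemma phi_ge0 t : 0 <= t -> 0 <= phi t.
Proof.
move=> t0; apply: sumr_ge0 => j _; apply: mulr_ge0; first exact: ler0n.
exact: PP_ge0.
Qed.

Lemma VV0 : VV 0 = hh N a N.
Proof.
rewrite /VV /PP; under eq_bigr do rewrite mexp0.
exact: (sum_ord_eq2 ord_max (hh N a)).
Qed.

Lemma VV_ge0 t : 0 <= t -> 0 <= VV t.
Proof.
move=> t0; apply: sumr_ge0 => j _; apply: mulr_ge0; first exact: PP_ge0.
exact: hh_ge0.
Qed.

Lemma cont_phi : continuous phi.
Proof. by move=> x; apply: cont_of_derive; apply: dphi. Qed.

Lemma cont_psi : continuous psi.
Proof. by move=> x; apply: cont_of_derive; apply: dpsi. Qed.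

Lemma mphi (D : set R) : measurable D -> measurable_fun D (fun x : R => (phi x)%:E).
Proof.
move=> mD; apply/measurable_EFinP.
exact: (measurable_funS measurableT (@subsetT _ D) (continuous_measurable_fun cont_phi)).
Qed.

Lemma mpsi (D : set R) : measurable D -> measurable_fun D (fun x : R => (psi x)%:E).
Proof.
move=> mD; apply/measurable_EFinP.
exact: (measurable_funS measurableT (@subsetT _ D) (continuous_measurable_fun cont_psi)).
Qed.

Local Open Scope ereal_scope.

Lemma int_bound (T : R) : (0 < T)%R ->
  \int[lebesgue_measure]_(x in `[0%R, T]) (phi x)%:E <= (hh N a N)%:E.
Proof.
move=> hT.
apply: (@le_trans _ _ (\int[lebesgue_measure]_(x in `[0%R, T]) (psi x)%:E)).
  apply: ge0_le_integral => //.
  - move=> x; rewrite /= in_itv /= => /andP[x0 _]; rewrite lee_fin; exact: phi_ge0.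
  - exact: mphi.
  - exact: mpsi.
  - move=> x; rewrite /= in_itv /= => /andP[x0 _]; rewrite lee_fin; exact: phi_le_psi.
rewrite (@continuous_FTC2 R psi FF 0%R T hT).
- rewrite -EFinB lee_fin /FF VV0; have := VV_ge0 (ltW hT); lra.
- by apply: derivable_within_continuous => x _; apply: dpsi.
- split.
  + by move=> x _; case: (dFF x).
  + apply: cvg_at_right_filter; apply: cont_of_derive; by case: (dFF 0%R).
  + apply: cvg_at_left_filter; apply: cont_of_derive; by case: (dFF T).
- move=> x _; rewrite derive1E; have := dFF x; move=> h; exact: derive_val.
Qed.

Lemma int_inf :
  \int[lebesgue_measure]_(x in `[0%R, +oo[) (phi x)%:E <= (hh N a N)%:E.
Proof.
pose F := fun n : nat => (`[0%R, n.+1%:R]%classic : set (measurableTypeR R)).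
have hU : \bigcup_n F n = `[0%R, +oo[%classic.
  apply/seteqP; split => x /=.
    by case=> n _; rewrite /F /= !in_itv /= => /andP[-> _].
  rewrite in_itv /= andbT => x0; exists (Num.truncn x) => //.
  by rewrite /F /= in_itv /= x0 /=; apply: ltW; apply: truncnS_gt.
rewrite -hU.
have hc := @ge0_nondecreasing_set_cvg_integral _ (measurableTypeR R) R F (fun x => (phi x)%:E)
   lebesgue_measure.
apply: (cvge_to_le (hc _ _ _ _)).
  - move=> m k mk; rewrite subsetEset /F; apply: subset_itvl.
    by rewrite bnd_simp ler_nat.
  - by move=> m; exact: measurable_itv.
  - by move=> m; apply: mphi; exact: measurable_itv.
  - move=> m x; rewrite /F /= in_itv /= => /andP[x0 _]; rewrite lee_fin; exact: phi_ge0.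
by apply: nearW => m; apply: int_bound; apply: ltr0Sn.
Qed.

End Main.

Lemma cont_der (R : realType) (g : R -> R) :
  (forall x : R, derivable g x 1) -> continuous g.
Proof. by move=> dg x; exact: (cont_of_derive (dg x)). Qed.

Lemma mcont (R : realType) (g : R -> R) (D : set (measurableTypeR R)) :
  measurable D -> (forall x, derivable g x 1) -> measurable_fun D (fun x => (g x)%:E).
Proof.
move=> mD dg; apply/measurable_EFinP.
have cg := cont_der dg.
exact: (measurable_funS measurableT (@subsetT _ D) (continuous_measurable_fun cg)).
Qed.

Theorem lemma5p1 (R : realType) (N : nat) (a : R) (hN : (2 <= N)%N) (ha : 0 <= a) :
  (\sum_(1 <= j < N.+1) (j%:R)%:E * occupation_time N a j
    <= (\sum_(1 <= j < N.+1) \sum_(0 <= i < j.+1) (a / 4) ^+ i)%:E)%E.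
Proof.
rewrite -hhN.
have dP (k : nat) (x : R) : derivable (fun s => PP a (inord k : 'I_N.+1) s * k%:R) x 1.
  by have := is_derive_mulk (k%:R) (dPP a (inord k : 'I_N.+1) x); case.
have mI : measurable (`[0%R, +oo[%classic : set (measurableTypeR R)).
  exact: measurable_itv.
have e j : ((j%:R)%:E * occupation_time N a j =
    \int[lebesgue_measure]_(x in `[0%R, +oo[)
       (PP a (inord j : 'I_N.+1) x * j%:R)%:E)%E.
  rewrite /occupation_time -ge0_integralZl_EFin //.
  - apply: eq_integral => x _; rewrite trans_probE -EFinM mulrC //.
  - move=> x; rewrite /= in_itv /= andbT => x0; rewrite lee_fin; rewrite trans_probE; exact: (PP_ge0 hN ha).
  - rewrite [X in measurable_fun _ X](_ : _ =
        fun x => (PP a (inord j : 'I_N.+1) x)%:E); last first.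
      by apply/funext => x; rewrite trans_probE.
    by apply: (mcont mI) => x; case: (dPP a (inord j : 'I_N.+1) x).
under eq_bigr do rewrite e.
rewrite -(@ge0_integral_sum _ _ _ lebesgue_measure _ mI _
   (fun j x => (PP a (inord j : 'I_N.+1) x * j%:R)%:E)); last 2 first.
- by move=> k; apply: (mcont mI) => x; apply: dP.
- move=> k x; rewrite /= in_itv /= andbT => x0; rewrite lee_fin.
  by apply: mulr_ge0; [exact: (PP_ge0 hN ha)|exact: ler0n].
apply: le_trans (int_inf hN ha).
rewrite le_eqVlt; apply/orP; left; apply/eqP.
apply: eq_integral => x _; rewrite sumEFin /phi; congr EFin.
by apply: eq_bigr => j _; rewrite mulrC.
Qed.
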